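(* Let $F_0=\begin{pmatrix}1&1&1\\1&1&0\\1&0&1\end{pmatrix}$. Then $\|F_0\|_{\mathrm{Schur}}\ge\frac{\sqrt{26}}{4}>\frac{1+\sqrt{2}}{2}$. Consequently, if $I$ is any index set and $A=(A(s,t))_{s,t\in I}$ is a matrix for which there exist distinct $s_1,s_2,s_3\in I$ and distinct $t_1,t_2,t_3\in I$ with $(A(s_i,t_j))_{i,j=1}^3=F_0$, then $\|A\|_{\mathrm{Schur}}>\frac{1+\sqrt{2}}{2}$.
   Context: For an index set $I$, let $\mathcal{K}_0$ be the space of matrices indexed by $I\times I$ with only finitely many nonzero entries, viewed as operators on $\ell^2(I)$. The Schur product of matrices $A,X$ indexed by $I\times I$ is $(A\bullet X)(s,t)=A(s,t)X(s,t)$. The Schur multiplier norm of $A$ is $\|A\|_{\mathrm{Schur}}=\sup\{\|A\bullet X\|_{\mathcal{B}(\ell^2(I))}/\|X\|_{\mathcal{B}(\ell^2(I))}: 0\ne X\in\mathcal{K}_0\}$. *)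

(* Defs.v *)
From Stdlib Require Import Reals List ClassicalEpsilon.
Import ListNotations.
Open Scope R_scope.

Definition C : Type := (R * R)%type.
Definition C0 : C := (0, 0).
Definition RtoC (r : R) : C := (r, 0).
Definition Cadd (z w : C) : C := (fst z + fst w, snd z + snd w).
Definition Cmul (z w : C) : C :=
  (fst z * fst w - snd z * snd w, fst z * snd w + snd z * fst w).
Definition Cnorm2 (z : C) : R := fst z * fst z + snd z * snd z.

Definition Csum {I : Type} (l : list I) (f : I -> C) : C :=
  fold_right (fun i acc => Cadd (f i) acc) C0 l.
Definition Rsum {I : Type} (l : list I) (f : I -> R) : R :=
  fold_right (fun i acc => f i + acc) 0 l.

Definition mat (I : Type) : Type := I -> I -> C.

Definition finsupp {I : Type} (X : mat I) : Prop :=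
  exists l : list I, forall s t, X s t <> C0 -> In s l /\ In t l.

Definition schur {I : Type} (A X : mat I) : mat I :=
  fun s t => Cmul (A s t) (X s t).

Definition covers {I : Type} (l : list I) (X : mat I) (v : I -> C) : Prop :=
  NoDup l /\ (forall s t, X s t <> C0 -> In s l /\ In t l)
  /\ (forall t, v t <> C0 -> In t l).

(** The set { ||X v||_2 : v finitely supported, ||v||_2 <= 1 }; finitely
    supported vectors are dense in l^2(I), so its supremum is the operator
    norm of X (for X in K_0) on B(l^2(I)). *)
Definition opnorm_set {I : Type} (X : mat I) (r : R) : Prop :=
  exists (v : I -> C) (l : list I),
    covers l X v /\ Rsum l (fun t => Cnorm2 (v t)) <= 1 /\
    r = sqrt (Rsum l (fun s => Cnorm2 (Csum l (fun t => Cmul (X s t) (v t))))).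

Definition opnorm {I : Type} (X : mat I) : R :=
  epsilon (inhabits 0) (fun r => is_lub (opnorm_set X) r).

Definition schur_ratios {I : Type} (A : mat I) (r : R) : Prop :=
  exists X : mat I, finsupp X /\ (exists s t, X s t <> C0) /\
    r = opnorm (schur A X) / opnorm X.

(** ||A||_Schur (a supremum in [0, +oo]) satisfies ||A||_Schur >= c. *)
Definition schur_norm_ge {I : Type} (A : mat I) (c : R) : Prop :=
  forall u, is_upper_bound (schur_ratios A) u -> c <= u.

Definition schur_norm_gt {I : Type} (A : mat I) (c : R) : Prop :=
  ~ is_upper_bound (schur_ratios A) c.

Inductive idx3 : Type := i1 | i2 | i3.

Definition F0 : mat idx3 := fun s t =>
  match s, t with
  | i2, i3 => RtoC 0
  | i3, i2 => RtoC 0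
  | _, _ => RtoC 1
  end.

(* Main.v *)
Require Import Defs.
From Stdlib Require Import Reals List Lra Psatz ClassicalEpsilon Classical FunctionalExtensionality.
Open Scope R_scope.

Definition S3 (f : idx3 -> R) : R := f i1 + f i2 + f i3.
Definition dl {I : Type} (a b : I) : R := if excluded_middle_informative (a = b) then 1 else 0.
Definition emb {I : Type} (s t : idx3 -> I) (M : idx3 -> idx3 -> R) : mat I :=
  fun a b => RtoC (S3 (fun i => S3 (fun j => dl a (s i) * dl b (t j) * M i j))).

Lemma dl_same {I} (x : I) : dl x x = 1.
Proof. unfold dl; destruct (excluded_middle_informative (x = x)); congruence. Qed.
Lemma dl_diff {I} (x y : I) : x <> y -> dl x y = 0.
Proof. intro H; unfold dl; destruct (excluded_middle_informative (x = y)); congruence. Qed.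

Lemma dl_cases {I} (e : idx3 -> I) (a : I) :
  (forall i, dl a (e i) = 0) \/ exists i, a = e i.
Proof.
  destruct (classic (exists i, a = e i)) as [H|H]; [right; exact H|left].
  intro i; apply dl_diff; intro E; apply H; exists i; exact E.
Qed.

Lemma Rsum_ext {I} (l : list I) f g : (forall x, f x = g x) -> Rsum l f = Rsum l g.
Proof. intro H; induction l; simpl; [reflexivity| rewrite H, IHl; reflexivity]. Qed.
Lemma Rsum_le {I} (l : list I) f g : (forall x, f x <= g x) -> Rsum l f <= Rsum l g.
Proof. intro H; induction l; simpl; [lra| specialize (H a); lra]. Qed.
Lemma Rsum_S3 {I} (l : list I) (F : idx3 -> I -> R) :
  Rsum l (fun b => S3 (fun j => F j b)) = S3 (fun j => Rsum l (F j)).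
Proof. induction l; simpl; unfold S3 in *; simpl in *; [ring| rewrite IHl; ring]. Qed.
Lemma Rsum_scal {I} (l : list I) c f : Rsum l (fun b => c * f b) = c * Rsum l f.
Proof. induction l; simpl; [ring| rewrite IHl; ring]. Qed.
Lemma fst_Csum {I} (l : list I) f : fst (Csum l f) = Rsum l (fun b => fst (f b)).
Proof. induction l; simpl; [reflexivity| rewrite IHl; reflexivity]. Qed.
Lemma snd_Csum {I} (l : list I) f : snd (Csum l f) = Rsum l (fun b => snd (f b)).
Proof. induction l; simpl; [reflexivity| rewrite IHl; reflexivity]. Qed.

Lemma Rsum_delta0 {I} (l : list I) x g : ~ In x l -> Rsum l (fun b => dl b x * g b) = 0.
Proof.
  induction l; simpl; intro H; [reflexivity|].
  rewrite dl_diff by (intro E; apply H; left; exact E).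
  rewrite IHl by (intro E; apply H; right; exact E). ring.
Qed.

Lemma Rsum_delta {I} (l : list I) x g : NoDup l ->
  Rsum l (fun b => dl b x * g b) = if excluded_middle_informative (In x l) then g x else 0.
Proof.
  induction l as [|y l IH]; simpl; intro Hn.
  - destruct (excluded_middle_informative False); [contradiction|reflexivity].
  - apply NoDup_cons_iff in Hn as [Hy Hn].
    destruct (classic (y = x)) as [E|E].
    + subst y. rewrite dl_same, Rsum_delta0 by exact Hy.
      destruct (excluded_middle_informative (x = x \/ In x l)) as [_|N]; [ring| tauto].
    + rewrite dl_diff by exact E. rewrite IH by exact Hn.
      destruct (excluded_middle_informative (In x l)) as [A|A];
      destruct (excluded_middle_informative (y = x \/ In x l)) as [B|B]; try tauto; ring.
Qed.

Lemma cov_v {I} (l : list I) X v x : covers l X v -> ~ In x l -> v x = C0.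
Proof. intros [_ [_ H]] N. apply NNPP; intro E; apply N, H, E. Qed.

Lemma if_In_g {I} (l : list I) X v x (g : Defs.C -> R) : g C0 = 0 -> covers l X v ->
  (if excluded_middle_informative (In x l) then g (v x) else 0) = g (v x).
Proof.
  intros Hg Hc; destruct (excluded_middle_informative (In x l)); [reflexivity|].
  rewrite (cov_v _ _ _ _ Hc n); symmetry; exact Hg.
Qed.
Ltac dlsimp Hs Ht := repeat first [ rewrite dl_same
  | rewrite dl_diff by (let H := fresh in intro H; first [apply Hs in H | apply Ht in H]; discriminate) ].

Lemma emb_at {I} (s t : idx3 -> I) M i j :
  (forall i j, s i = s j -> i = j) -> (forall i j, t i = t j -> i = j) ->
  emb s t M (s i) (t j) = RtoC (M i j).
Proof.
  intros Hs Ht; unfold emb, S3; destruct i, j; dlsimp Hs Ht; unfold RtoC; f_equal; ring.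
Qed.

Lemma inner_eq {I} (s t : idx3 -> I) M l v (g : R * R -> R) a :
  (forall x z, g (Cmul (RtoC x) z) = x * g z) -> g C0 = 0 ->
  (forall (l : list I) f, g (Csum l f) = Rsum l (fun b => g (f b))) ->
  NoDup l -> covers l (emb s t M) v ->
  g (Csum l (fun b => Cmul (emb s t M a b) (v b))) =
  S3 (fun i => dl a (s i) * S3 (fun j => M i j * g (v (t j)))).
Proof.
  intros Hm H0 Hsum Hn Hc. rewrite Hsum.
  transitivity (Rsum l (fun b => S3 (fun j => (S3 (fun i => dl a (s i) * M i j)) * (dl b (t j) * g (v b))))).
  { apply Rsum_ext; intro b. unfold emb. rewrite Hm. unfold S3; ring. }
  rewrite Rsum_S3. unfold S3 at 1. cbv beta.
  rewrite !Rsum_scal, !Rsum_delta by exact Hn.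
  rewrite !(if_In_g _ _ _ _ g H0 Hc). unfold S3; ring.
Qed.

Lemma gfst x z : fst (Cmul (RtoC x) z) = x * fst z.
Proof. unfold Cmul, RtoC; simpl; ring. Qed.
Lemma gsnd x z : snd (Cmul (RtoC x) z) = x * snd z.
Proof. unfold Cmul, RtoC; simpl; ring. Qed.

Lemma sq_dl {I} (e : idx3 -> I) (W : idx3 -> R) a :
  (forall i j, e i = e j -> i = j) ->
  S3 (fun i => dl a (e i) * W i) * S3 (fun i => dl a (e i) * W i) =
  S3 (fun i => dl a (e i) * (W i * W i)).
Proof.
  intro He. destruct (dl_cases e a) as [H|[i H]].
  - unfold S3; rewrite !H; ring.
  - subst a; unfold S3; destruct i; dlsimp He He; ring.
Qed.

Lemma emb_norm {I} (s t : idx3 -> I) M l v :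
  (forall i j, s i = s j -> i = j) -> (forall i j, t i = t j -> i = j) ->
  covers l (emb s t M) v ->
  Rsum l (fun a => Cnorm2 (Csum l (fun b => Cmul (emb s t M a b) (v b)))) =
  S3 (fun i => S3 (fun j => M i j * fst (v (t j))) * S3 (fun j => M i j * fst (v (t j)))
             + S3 (fun j => M i j * snd (v (t j))) * S3 (fun j => M i j * snd (v (t j)))).
Proof.
  intros Hs Ht Hc. pose proof Hc as [Hn [Hx _]].
  transitivity (Rsum l (fun a => S3 (fun i => dl a (s i) *
     (S3 (fun j => M i j * fst (v (t j))) * S3 (fun j => M i j * fst (v (t j)))
     + S3 (fun j => M i j * snd (v (t j))) * S3 (fun j => M i j * snd (v (t j))))))).
  { apply Rsum_ext; intro a. unfold Cnorm2.
    rewrite (inner_eq s t M l v fst a gfst eq_refl fst_Csum Hn Hc).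
    rewrite (inner_eq s t M l v snd a gsnd eq_refl snd_Csum Hn Hc).
    rewrite !sq_dl by exact Hs. unfold S3; ring. }
  rewrite Rsum_S3. unfold S3 at 1. cbv beta.
  rewrite !Rsum_delta by exact Hn.
  assert (Hz : forall i, ~ In (s i) l -> forall j, M i j = 0).
  { intros i Ni j. apply NNPP; intro E. apply Ni. apply (Hx (s i) (t j)).
    rewrite emb_at by assumption. unfold RtoC, C0; intro F; injection F; auto. }
  repeat match goal with |- context [excluded_middle_informative ?P] =>
    destruct (excluded_middle_informative P) end;
  unfold S3; repeat match goal with H : ~ In (s ?i) l |- _ =>
     rewrite !(Hz i H); clear H end; ring.
Qed.
Lemma vnorm_ge {I} (t : idx3 -> I) l (X : mat I) v :
  (forall i j, t i = t j -> i = j) -> covers l X v ->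
  S3 (fun j => Cnorm2 (v (t j))) <= Rsum l (fun b => Cnorm2 (v b)).
Proof.
  intros Ht Hc. pose proof Hc as [Hn _].
  assert (Hp : forall z, 0 <= Cnorm2 z) by (intro z; unfold Cnorm2; nra).
  apply Rle_trans with (Rsum l (fun b => S3 (fun j => dl b (t j) * Cnorm2 (v b)))).
  - rewrite Rsum_S3. unfold S3 at 2. cbv beta. rewrite !Rsum_delta by exact Hn.
    rewrite !(if_In_g _ _ _ _ Cnorm2) by first [exact Hc | (unfold Cnorm2, C0; simpl; ring)].
    unfold S3; lra.
  - apply Rsum_le; intro b. destruct (dl_cases t b) as [H|[j H]].
    + unfold S3; rewrite !H. specialize (Hp (v b)); lra.
    + subst b; unfold S3; destruct j; dlsimp Ht Ht; lra.
Qed.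

Lemma set_bound {I} (s t : idx3 -> I) M K r :
  (forall i j, s i = s j -> i = j) -> (forall i j, t i = t j -> i = j) ->
  0 <= K ->
  (forall x y : idx3 -> R, S3 (fun i => S3 (fun j => M i j * x j) * S3 (fun j => M i j * x j)
             + S3 (fun j => M i j * y j) * S3 (fun j => M i j * y j))
      <= K * S3 (fun j => x j * x j + y j * y j)) ->
  opnorm_set (emb s t M) r -> r <= sqrt K.
Proof.
  intros Hs Ht HK HM [v [l [Hc [H1 ->]]]].
  apply sqrt_le_1_alt. rewrite emb_norm by assumption.
  eapply Rle_trans; [apply (HM (fun j => fst (v (t j))) (fun j => snd (v (t j))))|].
  pose proof (vnorm_ge t l _ v Ht Hc) as H. unfold Cnorm2 in H, H1.
  rewrite <- (Rmult_1_r K) at 2. apply Rmult_le_compat_l; [exact HK|].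
  unfold S3 in *; cbv beta in *; lra.
Qed.

Lemma CS3 a1 a2 a3 x1 x2 x3 :
  (a1*x1+a2*x2+a3*x3)*(a1*x1+a2*x2+a3*x3) <= (a1*a1+a2*a2+a3*a3)*(x1*x1+x2*x2+x3*x3).
Proof.
  assert (E : (a1*a1+a2*a2+a3*a3)*(x1*x1+x2*x2+x3*x3) - (a1*x1+a2*x2+a3*x3)*(a1*x1+a2*x2+a3*x3)
    = (a1*x2-a2*x1)*(a1*x2-a2*x1)+(a1*x3-a3*x1)*(a1*x3-a3*x1)+(a2*x3-a3*x2)*(a2*x3-a3*x2)) by ring.
  pose proof (Rle_0_sqr (a1*x2-a2*x1)). pose proof (Rle_0_sqr (a1*x3-a3*x1)).
  pose proof (Rle_0_sqr (a2*x3-a3*x2)). unfold Rsqr in *. lra.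
Qed.

Lemma frob_bound M (x y : idx3 -> R) :
  S3 (fun i => S3 (fun j => M i j * x j) * S3 (fun j => M i j * x j)
             + S3 (fun j => M i j * y j) * S3 (fun j => M i j * y j))
      <= S3 (fun i => S3 (fun j => M i j * M i j)) * S3 (fun j => x j * x j + y j * y j).
Proof.
  unfold S3.
  pose proof (CS3 (M i1 i1) (M i1 i2) (M i1 i3) (x i1) (x i2) (x i3)).
  pose proof (CS3 (M i2 i1) (M i2 i2) (M i2 i3) (x i1) (x i2) (x i3)).
  pose proof (CS3 (M i3 i1) (M i3 i2) (M i3 i3) (x i1) (x i2) (x i3)).
  pose proof (CS3 (M i1 i1) (M i1 i2) (M i1 i3) (y i1) (y i2) (y i3)).
  pose proof (CS3 (M i2 i1) (M i2 i2) (M i2 i3) (y i1) (y i2) (y i3)).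
  pose proof (CS3 (M i3 i1) (M i3 i2) (M i3 i3) (y i1) (y i2) (y i3)).
  nra.
Qed.

Lemma opnorm_lub {I} (X : mat I) : (exists r, opnorm_set X r) -> bound (opnorm_set X) ->
  is_lub (opnorm_set X) (opnorm X).
Proof.
  intros He Hb. unfold opnorm. apply epsilon_spec.
  destruct (completeness _ Hb He) as [m Hm]. exists m; exact Hm.
Qed.

Lemma set_elem {I} (s t : idx3 -> I) M L (w : idx3 -> R) :
  (forall i j, s i = s j -> i = j) -> (forall i j, t i = t j -> i = j) ->
  NoDup L -> (forall i, In (s i) L) -> (forall j, In (t j) L) ->
  S3 (fun j => w j * w j) <= 1 ->
  opnorm_set (emb s t M) (sqrt (S3 (fun i => S3 (fun j => M i j * w j) * S3 (fun j => M i j * w j)))).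
Proof.
  intros Hs Ht Hn HLs HLt Hw.
  set (v := fun b => RtoC (S3 (fun j => dl b (t j) * w j))).
  assert (Hc : covers L (emb s t M) v).
  { split; [exact Hn| split].
    - intros a b Hab. destruct (dl_cases s a) as [H|[i H]].
      + exfalso; apply Hab. unfold emb, S3; rewrite !H. unfold RtoC, C0; f_equal; ring.
      + destruct (dl_cases t b) as [H'|[j H']].
        * exfalso; apply Hab. unfold emb, S3; rewrite !H'. unfold RtoC, C0; f_equal; ring.
        * subst; auto.
    - intros b Hb. destruct (dl_cases t b) as [H|[j H]].
      + exfalso; apply Hb. unfold v, S3; rewrite !H. unfold RtoC, C0; f_equal; ring.
      + subst; auto. }
  assert (Hv : forall j, v (t j) = RtoC (w j)).
  { intro j; unfold v, S3; destruct j; dlsimp Ht Ht; unfold RtoC; f_equal; ring. }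
  exists v, L. split; [exact Hc| split].
  - apply Rle_trans with (S3 (fun j => Cnorm2 (v (t j)))).
    + apply Rle_trans with (Rsum L (fun b => S3 (fun j => dl b (t j) * Cnorm2 (v b)))).
      * apply Req_le, Rsum_ext; intro b. destruct (dl_cases t b) as [H|[j H]].
        -- unfold v, S3, Cnorm2; rewrite !H; simpl; ring.
        -- subst b; unfold S3; destruct j; dlsimp Ht Ht; ring.
      * rewrite Rsum_S3. unfold S3 at 1. cbv beta. rewrite !Rsum_delta by exact Hn.
        repeat match goal with |- context [excluded_middle_informative ?P] =>
          destruct (excluded_middle_informative P) end;
        try (exfalso; match goal with H : ~ In _ _ |- _ => apply H; auto end).
        unfold S3; lra.
    + unfold S3; rewrite !Hv. unfold Cnorm2, RtoC in *; simpl. unfold S3 in Hw. lra.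
  - f_equal. rewrite emb_norm by assumption. unfold S3; rewrite !Hv; unfold RtoC; simpl; ring.
Qed.
Definition X0 (i j : idx3) : R :=
  match i, j with
  | i1, i1 => 1 | i1, _ => 2 | _, i1 => 2
  | i2, i2 => 1 | i3, i3 => 1 | _, _ => -2 end.
Definition F0r (i j : idx3) : R :=
  match i, j with i2, i3 => 0 | i3, i2 => 0 | _, _ => 1 end.
Definition Y0 (i j : idx3) : R := F0r i j * X0 i j.

Lemma schur_emb {I} (A : mat I) s t :
  (forall i j, s i = s j -> i = j) -> (forall i j, t i = t j -> i = j) ->
  (forall i j, A (s i) (t j) = F0 i j) ->
  schur A (emb s t X0) = emb s t Y0.
Proof.
  intros Hs Ht HA. extensionality a. extensionality b. unfold schur.
  destruct (dl_cases s a) as [H|[i H]].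
  - unfold emb, S3; rewrite !H. unfold Cmul, RtoC; simpl; f_equal; ring.
  - destruct (dl_cases t b) as [H'|[j H']].
    + unfold emb, S3; rewrite !H'. unfold Cmul, RtoC; simpl; f_equal; ring.
    + subst a b. rewrite !emb_at by assumption. rewrite HA.
      destruct i, j; unfold F0, Y0, F0r, X0, Cmul, RtoC; simpl; f_equal; ring.
Qed.

Lemma bound_emb {I} (s t : idx3 -> I) M :
  (forall i j, s i = s j -> i = j) -> (forall i j, t i = t j -> i = j) ->
  bound (opnorm_set (emb s t M)).
Proof.
  intros Hs Ht. exists (sqrt (S3 (fun i => S3 (fun j => M i j * M i j)))).
  intros r Hr. apply (set_bound s t M _ r Hs Ht); [ | apply frob_bound | exact Hr].
  unfold S3. repeat apply Rplus_le_le_0_compat; apply Rle_0_sqr.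
Qed.

Lemma key {I} (A : mat I) s t :
  (forall i j, s i = s j -> i = j) -> (forall i j, t i = t j -> i = j) ->
  (forall i j, A (s i) (t j) = F0 i j) ->
  exists r, schur_ratios A r /\ sqrt 26 / 4 <= r.
Proof.
  intros Hs Ht HA.
  set (dec := fun x y : I => excluded_middle_informative (x = y)).
  set (L := nodup dec (s i1 :: s i2 :: s i3 :: t i1 :: t i2 :: t i3 :: nil)).
  assert (HnL : NoDup L) by apply NoDup_nodup.
  assert (HLs : forall i, In (s i) L) by (intro i; apply nodup_In; destruct i; simpl; tauto).
  assert (HLt : forall i, In (t i) L) by (intro i; apply nodup_In; destruct i; simpl; tauto).
  assert (HX : opnorm (emb s t X0) = 3).
  { assert (E3 : opnorm_set (emb s t X0) 3).
    { replace 3 with (sqrt (S3 (fun i => S3 (fun j => X0 i j * (fun k => match k with i1 => 1 | _ => 0 end) j)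
         * S3 (fun j => X0 i j * (fun k => match k with i1 => 1 | _ => 0 end) j)))).
      - apply (set_elem s t X0 L); auto. unfold S3; simpl; lra.
      - transitivity (sqrt (3*3)); [f_equal; unfold S3, X0; simpl; ring | apply sqrt_square; lra]. }
    assert (Hl : is_lub (opnorm_set (emb s t X0)) (opnorm (emb s t X0))).
    { apply opnorm_lub; [exists 3; exact E3| apply bound_emb; auto]. }
    apply Rle_antisym.
    - apply Hl. intros r Hr. replace 3 with (sqrt 9).
      + apply (set_bound s t X0 _ r Hs Ht); [lra| |exact Hr]. intros x y. apply Req_le. unfold S3, X0; ring.
      + replace 9 with (3*3) by ring. rewrite sqrt_square; lra.
    - apply Hl, E3. }
  set (c := / sqrt 198).
  assert (Hc2 : c * c = / 198).
  { unfold c. rewrite <- Rinv_mult, sqrt_sqrt; lra. }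
  set (w := fun k => match k with i1 => 10 * c | _ => 7 * c end).
  assert (HY : sqrt (2902 / 198) <= opnorm (emb s t Y0)).
  { assert (E : opnorm_set (emb s t Y0) (sqrt (2902/198))).
    { replace (2902/198) with (S3 (fun i => S3 (fun j => Y0 i j * w j) * S3 (fun j => Y0 i j * w j))).
      - apply (set_elem s t Y0 L); auto. unfold S3, w; simpl. replace (10 * c * (10 * c) + 7 * c * (7 * c) + 7 * c * (7 * c)) with (198 * (c*c)) by ring.
        rewrite Hc2; lra.
      - unfold S3, w, Y0, F0r, X0; simpl.
        transitivity (2902 * (c * c)); [ring| rewrite Hc2; field]. }
    apply opnorm_lub; [exists (sqrt (2902/198)); exact E| apply bound_emb; auto| exact E]. }
  exists (opnorm (emb s t Y0) / opnorm (emb s t X0)). split.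
  - exists (emb s t X0). split; [|split].
    + exists L. intros a b Hab. destruct (dl_cases s a) as [H|[i H]].
      * exfalso; apply Hab. unfold emb, S3; rewrite !H. unfold RtoC, C0; f_equal; ring.
      * destruct (dl_cases t b) as [H'|[j H']].
        -- exfalso; apply Hab. unfold emb, S3; rewrite !H'. unfold RtoC, C0; f_equal; ring.
        -- subst; auto.
    + exists (s i1), (t i1). rewrite emb_at by auto. unfold RtoC, C0, X0; intro F; injection F; lra.
    + rewrite schur_emb by auto. reflexivity.
  - rewrite HX.
    assert (0 <= sqrt 26) by apply sqrt_pos.
    assert (0 <= sqrt (2902/198)) by apply sqrt_pos.
    assert (sqrt 26 * sqrt 26 = 26) by (apply sqrt_sqrt; lra).
    assert (sqrt (2902/198) * sqrt (2902/198) = 2902/198) by (apply sqrt_sqrt; lra).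
    assert (sqrt 26 * 3 <= sqrt (2902/198) * 4) by nra.
    apply Rle_trans with (sqrt (2902/198) / 3); [|unfold Rdiv; apply Rmult_le_compat_r; lra].
    unfold Rdiv; lra.
Qed.

Theorem mainTheorem3 :
  schur_norm_ge F0 (sqrt 26 / 4) /\
  sqrt 26 / 4 > (1 + sqrt 2) / 2 /\
  (forall (I : Type) (A : mat I) (s t : idx3 -> I),
     (forall i j, s i = s j -> i = j) ->
     (forall i j, t i = t j -> i = j) ->
     (forall i j, A (s i) (t j) = F0 i j) ->
     schur_norm_gt A ((1 + sqrt 2) / 2)).
Proof.
  assert (Hlt : sqrt 26 / 4 > (1 + sqrt 2) / 2).
  { assert (0 <= sqrt 26) by apply sqrt_pos. assert (0 <= sqrt 2) by apply sqrt_pos.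
    assert (sqrt 26 * sqrt 26 = 26) by (apply sqrt_sqrt; lra).
    assert (sqrt 2 * sqrt 2 = 2) by (apply sqrt_sqrt; lra).
    assert (sqrt 2 < 7/4) by nra. nra. }
  split; [|split; [exact Hlt|]].
  - intros u Hu. destruct (key F0 (fun i => i) (fun i => i)) as [r [Hr Hle]]; auto.
    specialize (Hu r Hr). lra.
  - intros I A s t Hs Ht HA Hb. destruct (key A s t Hs Ht HA) as [r [Hr Hle]].
    specialize (Hb r Hr). lra.
Qed.
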